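(* For every integer $\ell\ge2$ there exist two trees $T_1,T_2$ with the same number of vertices such that $D(T_1)>D(T_2)$ and $W_{2\ell}(T_1)>W_{2\ell}(T_2)$. In particular, $D(T_1)<D(T_2)$ does not in general imply $W_{2\ell}(T_1)>W_{2\ell}(T_2)$ for trees of the same order.
   Context: For a tree $T$, $D(T)=\sum_{x,y\in V(T)} d(x,y)$, where $d$ is the graph distance, and $W_m(T)$ denotes the number of closed walks of length $m$ in $T$. *)

(* Defs.v *)
From mathcomp Require Import all_boot.
Set Implicit Arguments. Unset Strict Implicit. Unset Printing Implicit Defensive.

Section Graphs.
Variable T : finType.
Variable e : rel T.

Definition simple_graph : Prop := symmetric e /\ irreflexive e.

Definition walk_of_length (n : nat) (x y : T) : bool :=
  [exists t : (n.+1).-tuple T,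
     [&& thead t == x, path e (thead t) (behead t) & last (thead t) (behead t) == y]].

Definition connected_graph : Prop := forall x y : T, connect e x y.

(* number of (undirected) edges; each edge is counted twice in ordered pairs *)
Definition num_edges : nat := #|[set p : T * T | e p.1 p.2]| %/ 2.

Definition is_tree : Prop :=
  [/\ simple_graph, 0 < #|T|, connected_graph & num_edges = #|T| - 1].

(* graph distance: the least n with a walk of length n from x to y
   (searched among n < |T|, which suffices in a connected graph) *)
Definition dist (x y : T) : nat :=
  find (fun n => walk_of_length n x y) (iota 0 #|T|).

Definition wiener_D : nat := \sum_(x : T) \sum_(y : T) dist x y.

Definition closed_walks (m : nat) : nat :=
  #|[set t : (m.+1).-tuple T |
       path e (thead t) (behead t) && (last (thead t) (behead t) == thead t)]|.
End Graphs.

(* Main.v *)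
Require Import Defs.
From mathcomp Require Import all_boot zify.
Set Implicit Arguments. Unset Strict Implicit. Unset Printing Implicit Defensive.

Section Walks.
Variable T : finType.
Variable e : rel T.

Lemma walkP m x y :
  walk_of_length e m x y <-> exists s : seq T, [/\ size s = m, path e x s & last x s = y].
Proof.
split.
- case/existsP=> t /and3P[/eqP Hx Hp /eqP Hy].
  exists (behead t); split.
  + by rewrite size_behead size_tuple.
  + by rewrite -Hx.
  + by rewrite -Hx.
- case=> s [Hs Hp Hy]. apply/existsP.
  have Hs' : size s == m by rewrite Hs.
  exists (cons_tuple x (Tuple Hs')).
  by rewrite /thead /tnth /= eqxx Hp Hy eqxx.
Qed.

Lemma dist_le m x y : walk_of_length e m x y -> m < #|T| -> dist e x y <= m.
Proof.
move=> Hw Hm. rewrite /dist.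
have Hhas : has (fun n => walk_of_length e n x y) (iota 0 #|T|).
  by apply/hasP; exists m => //; rewrite mem_iota.
case: (leqP (find (fun n => walk_of_length e n x y) (iota 0 #|T|)) m) => // Hlt.
have := before_find 0 Hlt. by rewrite nth_iota // Hw.
Qed.

Lemma dist_ge k x y : (forall m, m < k -> ~~ walk_of_length e m x y) -> k <= #|T| -> k <= dist e x y.
Proof.
move=> Hn Hk. rewrite /dist.
case: (leqP k (find (fun n => walk_of_length e n x y) (iota 0 #|T|))) => // Hlt.
have Hsz : find (fun n => walk_of_length e n x y) (iota 0 #|T|) < size (iota 0 #|T|).
  rewrite size_iota. exact: leq_trans Hlt Hk.
have Hsz2 := Hsz. rewrite size_iota in Hsz2.
rewrite -has_find in Hsz.
have := nth_find 0 Hsz. rewrite nth_iota //.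
rewrite add0n => Hw. by have := Hn _ Hlt; rewrite Hw.
Qed.

Hypothesis esym : symmetric e.

Lemma walk_cat m1 m2 x y z : walk_of_length e m1 x y -> walk_of_length e m2 y z ->
  walk_of_length e (m1 + m2) x z.
Proof.
move=> /walkP[s1 [H1 P1 L1]] /walkP[s2 [H2 P2 L2]]. apply/walkP.
exists (s1 ++ s2); split; first by rewrite size_cat H1 H2.
  by rewrite cat_path P1 L1 P2.
by rewrite last_cat L1.
Qed.

Lemma walk_rev m x y : walk_of_length e m x y -> walk_of_length e m y x.
Proof.
move=> /walkP[s [H P L]]. apply/walkP.
exists (rev (belast x s)); split.
- by rewrite size_rev size_belast.
- rewrite -L rev_path. apply: sub_path P => a b; by rewrite esym.
- case: s H P L => [|a s] H P L /=; first by rewrite -L.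
  by rewrite rev_cons last_rcons.
Qed.

Lemma walk_pot (h : T -> nat) : (forall u v, e u v -> h u <= (h v).+1) ->
  forall m x y, walk_of_length e m x y -> h x <= h y + m /\ h y <= h x + m.
Proof.
move=> Hh m x y /walkP[s [Hs P L]]. subst y m.
elim: s x P => [|a s IH] x /=; first by rewrite !addn0.
case/andP=> Hxa P. have [H1 H2] := IH a P.
have := Hh _ _ Hxa. have := Hh a x. rewrite esym => /(_ Hxa). lia.
Qed.

Lemma dist_pot (h : T -> nat) x y : (forall u v, e u v -> h u <= (h v).+1) ->
  (h x - h y) + (h y - h x) <= #|T| -> (h x - h y) + (h y - h x) <= dist e x y.
Proof.
move=> Hh Hk. apply: dist_ge => // m Hm. apply/negP => Hw.
have := walk_pot Hh Hw. lia.
Qed.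
End Walks.


Section PTree.
Variable n : nat.
Variable par : nat -> nat.
Hypothesis Hpar : forall x, 0 < x -> x <= n -> par x < x.

Definition ptree : rel 'I_n.+1 :=
  fun x y => ((0 < x) && (par x == y)) || ((0 < y) && (par y == x)).

Definition parI (x : 'I_n.+1) : 'I_n.+1 := inord (par x).

Lemma parIK (x : 'I_n.+1) : 0 < x -> val (parI x) = par x.
Proof. move=> Hx. rewrite /parI /= inordK //. have := Hpar Hx (ltn_ord x : x <= n). have := ltn_ord x. lia. Qed.

Lemma ptree_sym : symmetric ptree.
Proof. by move=> x y; rewrite /ptree orbC. Qed.

Lemma ptree_irr : irreflexive ptree.
Proof.
move=> x; rewrite /ptree orbb. apply/negP => /andP[Hx /eqP He].
have := Hpar Hx (ltn_ord x : x <= n). lia.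
Qed.

Lemma ptree_edge (x : 'I_n.+1) : 0 < x -> ptree x (parI x).
Proof. by move=> Hx; rewrite /ptree Hx parIK // eqxx. Qed.

Lemma conn0 (x : 'I_n.+1) : connect ptree x ord0.
Proof.
move: {2}(nat_of_ord x) (leqnn (nat_of_ord x)) => k. elim: k x => [|k IH] x Hx.
  have -> : x = ord0 by apply: ord_inj; move: Hx; rewrite /=; lia.
  exact: connect0.
case: (posnP (nat_of_ord x)) => Hx0.
  have -> : x = ord0 by apply: ord_inj; move: Hx0; rewrite /=; lia.
  exact: connect0.
apply: connect_trans (connect1 (ptree_edge Hx0)) (IH _ _).
rewrite parIK //. have := Hpar Hx0 (ltn_ord x : x <= n). move: Hx.
lia.
Qed.

Lemma ptree_conn : connected_graph ptree.
Proof.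
move=> x y. apply: connect_trans (conn0 x) _.
rewrite (sym_connect_sym ptree_sym). exact: conn0.
Qed.

Lemma ptree_edges : #|[set p : 'I_n.+1 * 'I_n.+1 | ptree p.1 p.2]| = n + n.
Proof.
set A := [set p : 'I_n.+1 * 'I_n.+1 | (0 < p.1) && (par p.1 == p.2)].
set B := [set p : 'I_n.+1 * 'I_n.+1 | (0 < p.2) && (par p.2 == p.1)].
have -> : [set p : 'I_n.+1 * 'I_n.+1 | ptree p.1 p.2] = A :|: B.
  by apply/setP => p; rewrite !inE.
have HAB : A :&: B = set0.
  apply/setP => [[x y]]; rewrite !inE /=. apply/negP => /andP[/andP[Hx /eqP E1] /andP[Hy /eqP E2]].
  have := Hpar Hx (ltn_ord x : x <= n). have := Hpar Hy (ltn_ord y : y <= n). lia.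
rewrite cardsU HAB cards0 subn0.
have Hc : #|[set~ (ord0 : 'I_n.+1)]| = n by rewrite cardsC1 card_ord.
have -> : A = [set (x, parI x) | x in [set~ (ord0 : 'I_n.+1)]].
  apply/setP => [[x y]]; rewrite inE /=. apply/andP/imsetP.
  - case=> Hx /eqP E. exists x; first by rewrite !inE; apply/eqP => E0; rewrite E0 in Hx.
    congr pair. apply/val_inj. by rewrite parIK.
  - case=> z; rewrite !inE => Hz [-> ->]. have Hz' : 0 < z by rewrite lt0n; apply: contra Hz => /eqP H; apply/eqP/val_inj.
    by rewrite Hz' parIK.
have -> : B = [set (parI x, x) | x in [set~ (ord0 : 'I_n.+1)]].
  apply/setP => [[x y]]; rewrite inE /=. apply/andP/imsetP.
  - case=> Hx /eqP E. exists y; first by rewrite !inE; apply/eqP => E0; rewrite E0 in Hx.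
    congr pair. apply/val_inj. by rewrite parIK.
  - case=> z; rewrite !inE => Hz [-> ->]. have Hz' : 0 < z by rewrite lt0n; apply: contra Hz => /eqP H; apply/eqP/val_inj.
    by rewrite Hz' parIK.
rewrite !card_imset ?Hc //.
- by move=> a b [].
- by move=> a b [].
Qed.

Lemma ptree_tree : is_tree ptree.
Proof.
split.
- split; [exact: ptree_sym | exact: ptree_irr].
- by rewrite card_ord.
- exact: ptree_conn.
- rewrite /num_edges ptree_edges card_ord. lia.
Qed.

Fixpoint up (f : nat) (x : 'I_n.+1) : seq 'I_n.+1 :=
  match f with 0 => [::] | f'.+1 => if val x == 0 then [::] else parI x :: up f' (parI x) end.

Lemma up_path f x : path ptree x (up f x).
Proof.
elim: f x => [|f IH] x //. rewrite [up _ _]/=. case: eqP => // /eqP Hx.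
rewrite [path _ _ _]/=. apply/andP; split; last exact: IH.
apply: ptree_edge. by rewrite lt0n.
Qed.

Lemma up_size f x : size (up f x) <= f.
Proof. elim: f x => [|f IH] x //=. case: eqP => //= _. exact: IH. Qed.

Lemma up_walk f x : last x (up f x) = ord0 -> exists2 k, k <= f & walk_of_length ptree k x ord0.
Proof.
move=> H. exists (size (up f x)); first exact: up_size.
apply/walkP. exists (up f x); split => //. exact: up_path.
Qed.
Fixpoint upn (f x : nat) := match f with 0 => x | f'.+1 => if x == 0 then 0 else upn f' (par x) end.

Lemma up_last f x : val (last x (up f x)) = upn f (val x).
Proof.
elim: f x => [|f IH] x //=. case: eqP => [->|/eqP Hx] //=.
rewrite IH parIK // lt0n //.
Qed.
End PTree.


Definition par2 (x : nat) := (x.-1)./2.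
Lemma Hpar2 : forall x, 0 < x -> x <= 399 -> par2 x < x.
Proof. rewrite /par2 => x *. rewrite -divn2. lia. Qed.

Lemma up2_all : all (fun x => upn par2 8 x == 0) (iota 0 400).
Proof. vm_compute. reflexivity. Qed.

Definition T2 : rel 'I_400 := ptree par2.

Lemma walk2_0 (x : 'I_400) : exists2 k, k <= 8 & walk_of_length T2 k x ord0.
Proof.
apply: (@up_walk 399 par2 Hpar2 8).
have H := up_last Hpar2 8 x.
have H2 := allP up2_all (val x).
rewrite mem_iota add0n ltn_ord in H2.
have H3 : upn par2 8 x = 0 by apply/eqP; exact: H2.
apply: val_inj. rewrite H. exact: H3.
Qed.

Lemma dist2 (x y : 'I_400) : dist T2 x y <= 16.
Proof.
have [k1 H1 W1] := walk2_0 x. have [k2 H2 W2] := walk2_0 y.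
have W := walk_cat W1 (walk_rev (@ptree_sym 399 par2) W2).
have Hc : k1 + k2 < #|'I_400| by rewrite card_ord; lia.
have := dist_le W Hc. lia.
Qed.

Lemma D2 : wiener_D T2 <= 16 * 400 * 400.
Proof.
rewrite /wiener_D.
have H : \sum_(x : 'I_400) \sum_(y : 'I_400) dist T2 x y <= \sum_(x : 'I_400) \sum_(y : 'I_400) 16.
  apply: leq_sum => x _; apply: leq_sum => y _; exact: dist2.
apply: leq_trans H _.
rewrite !sum_nat_const !card_ord. lia.
Qed.


Definition g (i j : nat) := (i - j) + (j - i).

Lemma Tsum p : 2 * (\sum_(i < p) (p - i)) = p * p.+1.
Proof.
elim: p => [|p IH]; first by rewrite big_ord0.
rewrite big_ord_recl /=.
have -> : \sum_(i < p) (p.+1 - bump 0 i) = \sum_(i < p) (p - i).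
  by apply: eq_bigr => i _; rewrite /bump /= add1n subSS.
lia.
Qed.

Lemma Sclosed p : 3 * (\sum_(i < p) \sum_(j < p) g i j) + p = p * p * p.
Proof.
elim: p => [|p IH]; first by rewrite big_ord0.
rewrite big_ord_recr /=.
have -> : \sum_(i < p) \sum_(j < p.+1) g i j = \sum_(i < p) \sum_(j < p) g i j + \sum_(i < p) (p - i).
  rewrite -big_split /=. apply: eq_bigr => i _. rewrite big_ord_recr /= /g.
  have := ltn_ord i. move=> Hi. congr addn. lia.
have -> : \sum_(j < p.+1) g p j = \sum_(i < p) (p - i).
  rewrite big_ord_recr /= /g subnn addn0 addn0. apply: eq_bigr => i _. have := ltn_ord i. lia.
have := Tsum p. lia.
Qed.


Definition par1 (x : nat) := if x < 198 then x.-1 else 0.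
Lemma Hpar1 : forall x, 0 < x -> x <= 399 -> par1 x < x.
Proof. rewrite /par1 => x *. case: ifP => _; lia. Qed.

Definition T1 : rel 'I_400 := ptree par1.
Definition h1 (x : 'I_400) : nat := if x < 198 then nat_of_ord x else 1.

Lemma h1_edge u v : T1 u v -> h1 u <= (h1 v).+1.
Proof.
rewrite /T1 /ptree /h1 /par1.
case/orP => /andP[H /eqP E]; move: E H; do 3?case: ifP; lia.
Qed.

Lemma dist1 (x y : 'I_400) : g (h1 x) (h1 y) <= dist T1 x y.
Proof.
apply: dist_pot; first exact: (@ptree_sym 399 par1).
  exact: h1_edge.
rewrite card_ord /h1. have := ltn_ord x. have := ltn_ord y. do 2?case: ifP; lia.
Qed.

Lemma D1 : \sum_(i < 198) \sum_(j < 198) g i j <= wiener_D T1.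
Proof.
rewrite /wiener_D.
rewrite (big_ord_widen 400 (fun i => \sum_(j < 198) g i j)) // big_mkcond /=.
apply: leq_sum => x _. case: ifP => Hx //.
rewrite (big_ord_widen 400 (fun j => g x j)) // big_mkcond /=.
apply: leq_sum => y _. case: ifP => Hy //.
apply: leq_trans (dist1 x y). by rewrite /h1 Hx Hy.
Qed.


Lemma tuple_seq (T : Type) m (t : (m.+1).-tuple T) : thead t :: behead t = t.
Proof. by rewrite {3}(tuple_eta t). Qed.

Lemma thead_nth (T : Type) m (t : (m.+1).-tuple T) x0 : thead t = nth x0 t 0.
Proof. by rewrite -(tuple_seq t). Qed.

Lemma tpathP (T : Type) (e : rel T) m (t : (m.+1).-tuple T) x0 :
  path e (thead t) (behead t) <-> (forall i, i < m -> e (nth x0 t i) (nth x0 t i.+1)).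
Proof.
split.
- move/(pathP x0) => H i Hi. have := H i. rewrite size_behead size_tuple /= => /(_ Hi).
  by rewrite tuple_seq nth_behead.
- move=> H. apply/(pathP x0) => i. rewrite size_behead size_tuple /= => Hi.
  rewrite tuple_seq nth_behead. exact: H.
Qed.

Lemma tlast (T : Type) m (t : (m.+1).-tuple T) x0 : last (thead t) (behead t) = nth x0 t m.
Proof.
rewrite (last_nth x0) tuple_seq size_behead size_tuple. done.
Qed.

Definition mk_tup (T : Type) (f : nat -> T) m : m.-tuple T :=
  @Tuple m T (mkseq f m) (introT eqP (size_mkseq f m)).

Lemma mk_tup_nth (T : Type) (f : nat -> T) m x0 i : i < m -> nth x0 (mk_tup f m) i = f i.
Proof. exact: nth_mkseq. Qed.


Definition cn (a b : nat) : nat :=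
  if (0 < a) && (par2 a == b) then 0 else if b == a.*2.+1 then 1 else 2.

Lemma cn_le a b : cn a b <= 2.
Proof. rewrite /cn. by do 2?case: ifP. Qed.

Lemma cn_det (a b b' : 'I_400) : T2 a b -> T2 a b' -> cn a b = cn a b' -> b = b'.
Proof.
move=> H1 H2 Hc. apply: ord_inj. move: H1 H2 Hc.
rewrite /T2 /ptree /cn /par2 -!divn2.
case/orP=> /andP[Ha /eqP E]; case/orP=> /andP[Hb /eqP E']; do 4?case: ifP; try lia.
Qed.

Section Count2.
Variable m : nat.
Definition code2 (t : (m.+1).-tuple 'I_400) : 'I_400 * m.-tuple 'I_3 :=
  (thead t, mk_tup (fun i => inord (cn (nth ord0 t i) (nth ord0 t i.+1))) m).

Lemma count2 : closed_walks T2 m <= 400 * 3 ^ m.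
Proof.
rewrite /closed_walks.
set S := [set t : (m.+1).-tuple 'I_400 | _].
rewrite -(@card_in_imset _ _ code2 S).
  apply: leq_trans (max_card _) _. by rewrite card_prod card_tuple !card_ord.
move=> t1 t2. rewrite !inE => /andP[P1 _] /andP[P2 _] [Eh Ec].
have HP1 := (proj1 (@tpathP _ T2 m t1 ord0) P1). have HP2 := (proj1 (@tpathP _ T2 m t2 ord0) P2).
have Hc : forall i, i < m -> cn (nth ord0 t1 i) (nth ord0 t1 i.+1) = cn (nth ord0 t2 i) (nth ord0 t2 i.+1).
  move=> i Hi. have := congr1 (fun s : seq 'I_3 => val (nth ord0 s i)) Ec.
  rewrite /= !nth_mkseq // !inordK //; apply: leq_ltn_trans (cn_le _ _) _; done.
have Hn : forall i, i <= m -> nth ord0 t1 i = nth ord0 t2 i.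
  elim=> [|i IH] Hi; first by rewrite -!thead_nth.
  have IH' := IH (ltnW Hi).
  apply: (@cn_det (nth ord0 t1 i)); first exact: HP1.
    rewrite IH'. exact: HP2.
  by rewrite Hc // IH'.
apply: eq_from_tnth => i. rewrite !(tnth_nth ord0). apply: Hn. have := ltn_ord i. lia.
Qed.
End Count2.


Lemma leaf_lt (k : 'I_202) : 198 + k < 400.
Proof. have := ltn_ord k. lia. Qed.

Section Count1.
Variable l : nat.
Definition encf (s : l.-tuple 'I_202) (i : nat) : 'I_400 :=
  if odd i then inord (198 + nth ord0 s i./2) else ord0.
Definition enc (s : l.-tuple 'I_202) : ((2 * l).+1).-tuple 'I_400 := mk_tup (encf s) (2 * l).+1.

Lemma enc_val s j : j < l -> val (nth ord0 (enc s) j.*2.+1) = 198 + nth ord0 s j.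
Proof.
move=> Hj. rewrite mk_tup_nth; last lia.
rewrite /encf /= odd_double /= uphalf_double inordK //.
have := ltn_ord (nth ord0 s j). lia.
Qed.

Lemma count1 : 202 ^ l <= closed_walks T1 (2 * l).
Proof.
rewrite /closed_walks.
have <- : #|[set enc s | s in [set: l.-tuple 'I_202]]| = 202 ^ l.
  rewrite card_imset ?cardsT ?card_tuple ?card_ord //.
  move=> s1 s2 E. apply: eq_from_tnth => j. rewrite !(tnth_nth ord0).
  apply: ord_inj. have := congr1 (fun t : ((2 * l).+1).-tuple 'I_400 => val (nth ord0 t (val j).*2.+1)) E.
  rewrite /= !enc_val ?ltn_ord //. lia.
apply: subset_leq_card. apply/subsetP => t /imsetP[s _ ->]. rewrite inE.
apply/andP; split.
- apply/(@tpathP _ T1 _ _ ord0) => i Hi.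
  rewrite !mk_tup_nth; try lia. rewrite /encf /=.
  case: (boolP (odd i)) => Ho /=.
  + rewrite /T1 /ptree inordK; last exact: leaf_lt.
    by rewrite /par1 /=.
  + rewrite /T1 /ptree inordK; last exact: leaf_lt.
    by rewrite /par1 /= ?orbT.
- rewrite (tlast _ ord0) (thead_nth _ ord0) !mk_tup_nth ?ltnSn //.
  by rewrite /encf /= oddM.
Qed.
End Count1.

Unset Implicit Arguments.

Lemma pow_ineq l : 2 <= l -> 400 * 3 ^ (2 * l) < 202 ^ l.
Proof.
move=> Hl. have -> : l = (l - 2) + 2 by lia.
move: (l - 2) => k.
have H9 : 9 ^ k <= 202 ^ k.
  elim: k => // k IH. rewrite !expnS. apply: leq_mul => //.
rewrite expnM (expnD 202) (expnD (3 ^ 2)).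
have -> : (3 ^ 2) ^ 2 = 81 by [].
have -> : 202 ^ 2 = 202 * 202 by [].
have -> : 3 ^ 2 = 9 by [].
have Hp : 0 < 202 ^ k by rewrite expn_gt0.
move: H9 Hp. move: (9 ^ k) (202 ^ k) => A B. lia.
Qed.

Theorem mainTheorem8 :
  forall l : nat, 2 <= l ->
  exists (n : nat) (e1 e2 : rel 'I_n),
    [/\ is_tree e1, is_tree e2,
        wiener_D e2 < wiener_D e1
      & closed_walks e2 (2 * l) < closed_walks e1 (2 * l)].
Proof.
move=> l Hl. exists 400, T1, T2. split.
- exact: (@ptree_tree 399 par1 Hpar1).
- exact: (@ptree_tree 399 par2 Hpar2).
- have := D2. have := D1. have := Sclosed 198. lia.
- have := count2 (2 * l). have := count1 l. have := pow_ineq l Hl. lia.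
Qed.
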